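(* Let $\mathbb{X}=\mathbb{X}(p_1,p_2,p_3)$ be a weighted projective line over an algebraically closed field with $\chi_{\mathbb{X}}<0$, and let $\mathcal{S}=\{\vec{x}\in\mathbb{L}\mid 0\leq\vec{x}\leq n\vec{\omega}+\vec{c}\text{ for all integers }n\geq 2\}$. Then there exists a bijection between the set of $\tau$-orbits of line bundles in $\mathrm{coh}\,\mathbb{X}$ and $\mathcal{S}$.
   Context: $\mathbb{L}=\mathbb{L}(p_1,p_2,p_3)$ ($p_i\geq 2$) is the abelian group generated by $\vec{x}_1,\vec{x}_2,\vec{x}_3$ with $p_1\vec{x}_1=p_2\vec{x}_2=p_3\vec{x}_3=:\vec{c}$; every $\vec{x}\in\mathbb{L}$ has a unique normal form $\vec{x}=\sum_i l_i\vec{x}_i+l\vec{c}$ with $0\leq l_i\leq p_i-1$, $l\in\mathbb{Z}$, and $\vec{x}\geq \vec{y}$ means that $\vec{x}-\vec{y}$ is a nonnegative integer combination of $\vec{x}_1,\vec{x}_2,\vec{x}_3$. $\vec{\omega}=\vec{c}-\sum_i\vec{x}_i$ and $\chi_{\mathbb{X}}=2-\sum_{i=1}^3(1-1/p_i)$. $\mathrm{coh}\,\mathbb{X}=\mathrm{mod}^{\mathbb{L}}S/\mathrm{mod}^{\mathbb{L}}_0S$ for $S=k[x_1,x_2,x_3]/(x_1^{p_1}+x_2^{p_2}+x_3^{p_3})$ graded by $\deg x_i=\vec{x}_i$; up to isomorphism the line bundles are the $\mathcal{O}(\vec{x})$, $\vec{x}\in\mathbb{L}$, with $\mathrm{Hom}(\mathcal{O}(\vec{x}),\mathcal{O}(\vec{y}))\cong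 S_{\vec{y}-\vec{x}}$, and the Auslander–Reiten translation is $\tau\mathcal{O}(\vec{x})=\mathcal{O}(\vec{x}+\vec{\omega})$. *)

(* Defs.v *)
From HB Require Import structures.
From mathcomp Require Import all_boot all_order all_algebra.
Set Implicit Arguments. Unset Strict Implicit. Unset Printing Implicit Defensive.
Import Order.TTheory GRing.Theory Num.Theory.
Local Open Scope ring_scope.

(* The string group L = L(p1,p2,p3), presented as the quotient of Z^4
   (coefficients of x1, x2, x3, c) by the relations p_i x_i = c. *)
Record Lrep := mkL { cx1 : int; cx2 : int; cx3 : int; cc : int }.

Definition Lnf (p1 p2 p3 : nat) (v : Lrep) : Lrep :=
  mkL (cx1 v %% p1)%Z (cx2 v %% p2)%Z (cx3 v %% p3)%Z
      (cc v + (cx1 v %/ p1)%Z + (cx2 v %/ p2)%Z + (cx3 v %/ p3)%Z).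

Definition Leq (p1 p2 p3 : nat) (u v : Lrep) : Prop := Lnf p1 p2 p3 u = Lnf p1 p2 p3 v.

Definition Ladd (u v : Lrep) : Lrep :=
  mkL (cx1 u + cx1 v) (cx2 u + cx2 v) (cx3 u + cx3 v) (cc u + cc v).
Definition Lscale (n : int) (u : Lrep) : Lrep :=
  mkL (n * cx1 u) (n * cx2 u) (n * cx3 u) (n * cc u).
Definition L0 : Lrep := mkL 0 0 0 0.
Definition Lc : Lrep := mkL 0 0 0 1.
Definition Lomega : Lrep := mkL (-1) (-1) (-1) 1.

Definition Lle (p1 p2 p3 : nat) (x y : Lrep) : Prop :=
  exists a b c : nat, Leq p1 p2 p3 y (Ladd x (mkL a%:Z b%:Z c%:Z 0)).

Definition chiX (p1 p2 p3 : nat) : rat :=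
  2 - ((1 - (p1%:R)^-1) + (1 - (p2%:R)^-1) + (1 - (p3%:R)^-1)).

Definition inS (p1 p2 p3 : nat) (x : Lrep) : Prop :=
  Lle p1 p2 p3 L0 x /\
  forall n : int, 2 <= n -> Lle p1 p2 p3 x (Ladd (Lscale n Lomega) Lc).

(* O(x) and O(y) lie in the same tau-orbit, tau O(x) = O(x + omega):
   y = x + n omega in L for some integer n. *)
Definition same_tau_orbit (p1 p2 p3 : nat) (x y : Lrep) : Prop :=
  exists n : int, Leq p1 p2 p3 y (Ladd x (Lscale n Lomega)).

(* Main.v *)
Require Import Defs.
From HB Require Import structures.
From mathcomp Require Import all_boot all_order all_algebra.
From mathcomp Require Import zify ring lra.
Import Order.TTheory GRing.Theory Num.Theory.
Local Open Scope ring_scope.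

Definition lval p1 p2 p3 v := cc (Lnf p1 p2 p3 v).
Definition zk x k := Ladd x (Lscale k Lomega).
Definition Lsub u v := mkL (cx1 u - cx1 v) (cx2 u - cx2 v) (cx3 u - cx3 v) (cc u - cc v).

Lemma divz_split (a b p : int) : p != 0 -> divz (a + b) p = divz a p + divz (modz a p + b) p.
Proof. by move=> hp; rewrite {1}(divz_eq a p) -addrA divzMDl. Qed.

Lemma modz_split (a b p : int) : modz (a + b) p = modz (modz a p + b) p.
Proof. by rewrite {1}(divz_eq a p) -addrA modzMDl. Qed.

Lemma Leq_add p1 p2 p3 u v w : (0 < p1)%N -> (0 < p2)%N -> (0 < p3)%N ->
  Leq p1 p2 p3 u v -> Leq p1 p2 p3 (Ladd u w) (Ladd v w).
Proof.
move=> h1 h2 h3.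
have n1 : p1%:Z != 0 by rewrite eqz_nat -lt0n.
have n2 : p2%:Z != 0 by rewrite eqz_nat -lt0n.
have n3 : p3%:Z != 0 by rewrite eqz_nat -lt0n.
case: u => u1 u2 u3 u4; case: v => v1 v2 v3 v4; case: w => w1 w2 w3 w4.
rewrite /Leq /Lnf /Ladd /= => [[e1 e2 e3 e4]].
congr mkL.
- by rewrite modz_split e1 -modz_split.
- by rewrite modz_split e2 -modz_split.
- by rewrite modz_split e3 -modz_split.
rewrite (divz_split u1 w1 _ n1) (divz_split u2 w2 _ n2) (divz_split u3 w3 _ n3).
rewrite (divz_split v1 w1 _ n1) (divz_split v2 w2 _ n2) (divz_split v3 w3 _ n3) e1 e2 e3.
move: e4; move: (u1 %/ p1)%Z (u2 %/ p2)%Z (u3 %/ p3)%Z (v1 %/ p1)%Z (v2 %/ p2)%Z (v3 %/ p3)%Z (((v1 %% p1)%Z + w1) %/ p1)%Z (((v2 %% p2)%Z + w2) %/ p2)%Z (((v3 %% p3)%Z + w3) %/ p3)%Z => *; lia.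
Qed.

Lemma Lrep_eta v : v = mkL (cx1 v) (cx2 v) (cx3 v) (cc v).
Proof. by case: v. Qed.

Lemma Leq_sym p1 p2 p3 u v : Leq p1 p2 p3 u v -> Leq p1 p2 p3 v u.
Proof. by []. Qed.

Lemma Leq_trans p1 p2 p3 u v w : Leq p1 p2 p3 u v -> Leq p1 p2 p3 v w -> Leq p1 p2 p3 u w.
Proof. by rewrite /Leq => ->. Qed.

Lemma Leq_lval p1 p2 p3 u v : Leq p1 p2 p3 u v -> lval p1 p2 p3 u = lval p1 p2 p3 v.
Proof. by rewrite /Leq /lval => ->. Qed.

Lemma Lle_lval p1 p2 p3 x y : (0 < p1)%N -> (0 < p2)%N -> (0 < p3)%N ->
  Lle p1 p2 p3 x y <-> 0 <= lval p1 p2 p3 (Lsub y x).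
Proof.
move=> h1 h2 h3.
have g1 : 0 < p1%:Z by rewrite ltz_nat.
have g2 : 0 < p2%:Z by rewrite ltz_nat.
have g3 : 0 < p3%:Z by rewrite ltz_nat.
split.
- move=> [a [b [c E]]].
  have := Leq_add _ _ _ _ _ (Lsub (mkL 0 0 0 0) x) h1 h2 h3 E.
  move/Leq_lval.
  have -> : Ladd y (Lsub (mkL 0 0 0 0) x) = Lsub y x.
    by rewrite /Ladd /Lsub /=; congr mkL; ring.
  move=> ->.
  have -> : Ladd (Ladd x (mkL a b c 0)) (Lsub (mkL 0 0 0 0) x) = mkL a b c 0.
    by rewrite /Ladd /Lsub /=; congr mkL; ring.
  rewrite /lval /Lnf /= add0r.
  by rewrite !addr_ge0 // divz_ge0.
- set d := Lsub y x => hm.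
  set m := lval p1 p2 p3 d.
  set r1 := (cx1 d %% p1)%Z. set r2 := (cx2 d %% p2)%Z. set r3 := (cx3 d %% p3)%Z.
  have r1g : 0 <= r1 by apply: modz_ge0; rewrite lt0r_neq0.
  have r2g : 0 <= r2 by apply: modz_ge0; rewrite lt0r_neq0.
  have r3g : 0 <= r3 by apply: modz_ge0; rewrite lt0r_neq0.
  have r1l : r1 < p1 by apply: ltz_pmod.
  have r2l : r2 < p2 by apply: ltz_pmod.
  have r3l : r3 < p3 by apply: ltz_pmod.
  exists (absz (m * p1%:Z + r1)), (absz r2), (absz r3).
  have hpos : 0 <= m * p1%:Z + r1 by rewrite addr_ge0 // mulr_ge0 // ltW.
  rewrite (gez0_abs hpos) (gez0_abs r2g) (gez0_abs r3g).
  have E : Leq p1 p2 p3 d (mkL (m * p1 + r1) r2 r3 0).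
    rewrite /Leq /Lnf /= -/r1 -/r2 -/r3.
    have q1 : (r1 %/ p1 = 0)%Z by apply: divz_small; rewrite r1g r1l.
    have q2 : (r2 %/ p2 = 0)%Z by apply: divz_small; rewrite r2g r2l.
    have q3 : (r3 %/ p3 = 0)%Z by apply: divz_small; rewrite r3g r3l.
    congr mkL.
    + by rewrite modzMDl modz_mod.
    + by rewrite modz_mod.
    + by rewrite modz_mod.
    rewrite divzMDl ?lt0r_neq0 // q1 q2 q3 -[m]/(cc (Lnf p1 p2 p3 d)) /Lnf /=.
    ring.
  have := Leq_add _ _ _ _ _ x h1 h2 h3 E.
  have -> : Ladd d x = y.
    by rewrite /d [RHS]Lrep_eta /Ladd /Lsub /=; congr mkL; ring.
  move=> H; apply: Leq_trans H _.
  by rewrite /Leq /Ladd /=; congr Lnf; congr mkL; ring.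
Qed.

Lemma divz_neg1 (a p : int) : 0 < p -> divz (-1 - a) p = -1 - divz a p.
Proof.
move=> hp.
have r0 := modz_ge0 a (lt0r_neq0 hp). have rl := ltz_pmod a hp.
rewrite {1}(divz_eq a p).
rewrite (_ : -1 - _ = (-1 - (a %/ p)%Z) * p + (p - 1 - (a %% p)%Z)); last by ring.
rewrite divzMDl ?lt0r_neq0 // (divz_small (m := p - 1 - (a %% p)%Z)) ?addr0 //.
rewrite abszE gtr0_norm //; apply/andP; split; lia.
Qed.

Definition Pk p1 p2 p3 x k : bool := 0 <= lval p1 p2 p3 (zk x k).

Lemma lval_dual p1 p2 p3 x k n : (0 < p1)%N -> (0 < p2)%N -> (0 < p3)%N ->
  lval p1 p2 p3 (Lsub (Ladd (Lscale n Lomega) Lc) (zk x k)) =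
  -1 - lval p1 p2 p3 (zk x (k - n + 1)).
Proof.
move=> h1 h2 h3.
have g1 : 0 < p1%:Z by rewrite ltz_nat.
have g2 : 0 < p2%:Z by rewrite ltz_nat.
have g3 : 0 < p3%:Z by rewrite ltz_nat.
rewrite /lval /Lnf /zk /Lsub /Ladd /Lscale /=.
rewrite (_ : n * -1 + 0 - (cx1 x + k * -1) = -1 - (cx1 x + (k - n + 1) * -1)); last by ring.
rewrite (_ : n * -1 + 0 - (cx2 x + k * -1) = -1 - (cx2 x + (k - n + 1) * -1)); last by ring.
rewrite (_ : n * -1 + 0 - (cx3 x + k * -1) = -1 - (cx3 x + (k - n + 1) * -1)); last by ring.
rewrite !divz_neg1 //. ring.
Qed.

Lemma inS_iff p1 p2 p3 x k : (0 < p1)%N -> (0 < p2)%N -> (0 < p3)%N ->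
  inS p1 p2 p3 (zk x k) <-> Pk p1 p2 p3 x k /\ forall j, j < k -> ~~ Pk p1 p2 p3 x j.
Proof.
move=> h1 h2 h3.
rewrite /inS Lle_lval //.
have -> : Lsub (zk x k) L0 = zk x k.
  by rewrite [RHS]Lrep_eta /Lsub /=; congr mkL; ring.
split=> -[H1 H2]; split => //.
- move=> j hj.
  have := H2 (k - j + 1) ltac:(lia).
  rewrite Lle_lval // lval_dual // (_ : k - (k - j + 1) + 1 = j); last by ring.
  rewrite /Pk; lia.
- move=> n hn.
  rewrite Lle_lval // lval_dual //.
  have := H2 (k - n + 1) ltac:(lia).
  rewrite /Pk; lia.
Qed.

Lemma divz_mono (p a b : int) : 0 < p -> a <= b -> (a %/ p)%Z <= (b %/ p)%Z.
Proof.
move=> hp hab.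
have ea := divz_eq a p. have eb := divz_eq b p.
have h1 := modz_ge0 a (lt0r_neq0 hp). have h2 := ltz_pmod b hp.
have h3 := modz_ge0 b (lt0r_neq0 hp). have h4 := ltz_pmod a hp.
nia.
Qed.

Lemma chi_D p1 p2 p3 : (0 < p1)%N -> (0 < p2)%N -> (0 < p3)%N ->
  chiX p1 p2 p3 < 0 -> (p2 * p3 + p1 * p3 + p1 * p2 < p1 * p2 * p3)%N.
Proof.
move=> h1 h2 h3 hc.
have a0 : (p1%:R : rat) != 0 by rewrite pnatr_eq0 -lt0n.
have b0 : (p2%:R : rat) != 0 by rewrite pnatr_eq0 -lt0n.
have c0 : (p3%:R : rat) != 0 by rewrite pnatr_eq0 -lt0n.
have E : chiX p1 p2 p3 * (p1%:R * p2%:R * p3%:R) =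
   p2%:R * p3%:R + p1%:R * p3%:R + p1%:R * p2%:R - p1%:R * p2%:R * p3%:R.
  by rewrite /chiX; field; rewrite a0 b0 c0.
have pos : (0 : rat) < p1%:R * p2%:R * p3%:R by rewrite !mulr_gt0 // ltr0n.
have : chiX p1 p2 p3 * (p1%:R * p2%:R * p3%:R) < 0 by rewrite pmulr_llt0.
rewrite E subr_lt0 -!natrM -!natrD ltr_nat //.
Qed.


Lemma lval_mult p1 p2 p3 x m : (0 < p1)%N -> (0 < p2)%N -> (0 < p3)%N ->
  lval p1 p2 p3 (zk x (m * (p1%:Z * p2%:Z * p3%:Z))) =
  lval p1 p2 p3 x + m * (p1%:Z * p2%:Z * p3%:Z - (p2%:Z * p3%:Z + p1%:Z * p3%:Z + p1%:Z * p2%:Z)).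
Proof.
move=> h1 h2 h3.
have n1 : p1%:Z != 0 by rewrite eqz_nat -lt0n.
have n2 : p2%:Z != 0 by rewrite eqz_nat -lt0n.
have n3 : p3%:Z != 0 by rewrite eqz_nat -lt0n.
rewrite /lval /Lnf /zk /Ladd /Lscale /=.
rewrite (_ : cx1 x + m * (p1%:Z * p2%:Z * p3%:Z) * -1 = (- (m * p2%:Z * p3%:Z)) * p1%:Z + cx1 x); last by ring.
rewrite (_ : cx2 x + m * (p1%:Z * p2%:Z * p3%:Z) * -1 = (- (m * p1%:Z * p3%:Z)) * p2%:Z + cx2 x); last by ring.
rewrite (_ : cx3 x + m * (p1%:Z * p2%:Z * p3%:Z) * -1 = (- (m * p1%:Z * p2%:Z)) * p3%:Z + cx3 x); last by ring.
rewrite !divzMDl //. ring.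
Qed.

Lemma lval_upper p1 p2 p3 x k k0 : (0 < p1)%N -> (0 < p2)%N -> (0 < p3)%N ->
  k0 <= k -> lval p1 p2 p3 (zk x k) <= lval p1 p2 p3 (zk x k0) + (k - k0).
Proof.
move=> h1 h2 h3 hk.
have g1 : 0 < p1%:Z by rewrite ltz_nat.
have g2 : 0 < p2%:Z by rewrite ltz_nat.
have g3 : 0 < p3%:Z by rewrite ltz_nat.
rewrite /lval /Lnf /zk /Ladd /Lscale /=.
have d1 := divz_mono _ (cx1 x + k * -1) (cx1 x + k0 * -1) g1 ltac:(lia).
have d2 := divz_mono _ (cx2 x + k * -1) (cx2 x + k0 * -1) g2 ltac:(lia).
have d3 := divz_mono _ (cx3 x + k * -1) (cx3 x + k0 * -1) g3 ltac:(lia).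
move: d1 d2 d3.
move: ((cx1 x + k * -1) %/ p1)%Z ((cx1 x + k0 * -1) %/ p1)%Z ((cx2 x + k * -1) %/ p2)%Z ((cx2 x + k0 * -1) %/ p2)%Z ((cx3 x + k * -1) %/ p3)%Z ((cx3 x + k0 * -1) %/ p3)%Z => *.
lia.
Qed.

Lemma Pk_lower p1 p2 p3 x k : (0 < p1)%N -> (0 < p2)%N -> (0 < p3)%N ->
  0 < p1%:Z * p2%:Z * p3%:Z - (p2%:Z * p3%:Z + p1%:Z * p3%:Z + p1%:Z * p2%:Z) ->
  k < (- `|lval p1 p2 p3 x| - p1%:Z * p2%:Z * p3%:Z) * (p1%:Z * p2%:Z * p3%:Z) ->
  ~~ Pk p1 p2 p3 x k.
Proof.
move=> h1 h2 h3 hD hk.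
set N := p1%:Z * p2%:Z * p3%:Z in hD hk *.
have gN : 0 < N by rewrite /N !mulr_gt0 // ltz_nat.
set m := (k %/ N)%Z.
have e := divz_eq k N. have r0 := modz_ge0 k (lt0r_neq0 gN). have rl := ltz_pmod k gN.
rewrite -/m in e.
have hle : m * N <= k by lia.
have U := lval_upper _ _ _ x _ _ h1 h2 h3 hle.
rewrite lval_mult // in U.
move: hD hk U.
set D := N - _.
set L := lval p1 p2 p3 x.
have nL := ler_norm L.
have nA := normr_ge0 L.
rewrite /Pk -ltNge.
move: (lval p1 p2 p3 (zk x k)) (`|L|) nL nA => V A nL nA.
move=> hD hk U.
move: e r0 rl; move: (k %% N)%Z => r e r0 rl.
clearbody m D N L.
have hm : m < - A - N.
  rewrite ltNge; apply/negP => H.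
  have := ler_wpM2r (ltW gN) H. lia.
have hmD : m * D <= m.
  have : 0 <= (-m) * (D - 1) by apply: mulr_ge0; lia.
  lia.
lia.
Qed.

Lemma Pk_upper p1 p2 p3 x : (0 < p1)%N -> (0 < p2)%N -> (0 < p3)%N ->
  0 < p1%:Z * p2%:Z * p3%:Z - (p2%:Z * p3%:Z + p1%:Z * p3%:Z + p1%:Z * p2%:Z) ->
  Pk p1 p2 p3 x (`|lval p1 p2 p3 x| * (p1%:Z * p2%:Z * p3%:Z)).
Proof.
move=> h1 h2 h3 hD.
rewrite /Pk lval_mult //.
move: hD; set D := _ - _ => hD.
have nL := ler_norm (- lval p1 p2 p3 x).
rewrite normrN in nL.
have nL2 := normr_ge0 (lval p1 p2 p3 x).
move: (lval p1 p2 p3 x) (`|lval p1 p2 p3 x|) nL nL2 => L A nL nL2.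
have : 0 <= A * (D - 1) by rewrite mulr_ge0 // subr_ge0.
clearbody D. nia.
Qed.

Lemma zk0 x : zk x 0 = x.
Proof. by rewrite [RHS]Lrep_eta /zk /Ladd /Lscale /=; congr mkL; ring. Qed.

Lemma zk_add x a b : Ladd (zk x a) (Lscale b Lomega) = zk x (a + b).
Proof. by rewrite /zk /Ladd /Lscale /=; congr mkL; ring. Qed.

Lemma min_uniq (P : int -> bool) k1 k2 :
  P k1 /\ (forall j, j < k1 -> ~~ P j) -> P k2 /\ (forall j, j < k2 -> ~~ P j) -> k1 = k2.
Proof.
move=> [P1 H1] [P2 H2]; case: (ltgtP k1 k2) => // h.
- by move: (H2 _ h); rewrite P1.
- by move: (H1 _ h); rewrite P2.
Qed.

Theorem proposition5p1 (p1 p2 p3 : nat) :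
  (2 <= p1)%N -> (2 <= p2)%N -> (2 <= p3)%N ->
  chiX p1 p2 p3 < 0 ->
  exists f : Lrep -> Lrep,
    [/\ forall x, inS p1 p2 p3 (f x),
        forall x y, Leq p1 p2 p3 (f x) (f y) <-> same_tau_orbit p1 p2 p3 x y
      & forall s, inS p1 p2 p3 s -> exists x, Leq p1 p2 p3 (f x) s].
Proof.
move=> q1 q2 q3 hchi.
have h1 : (0 < p1)%N by apply: leq_trans q1.
have h2 : (0 < p2)%N by apply: leq_trans q2.
have h3 : (0 < p3)%N by apply: leq_trans q3.
have hn := chi_D _ _ _ h1 h2 h3 hchi.
have hD : 0 < p1%:Z * p2%:Z * p3%:Z - (p2%:Z * p3%:Z + p1%:Z * p3%:Z + p1%:Z * p2%:Z).
  rewrite subr_gt0 -!PoszM -!PoszD ltz_nat; exact: hn.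
have gN : 0 < p1%:Z * p2%:Z * p3%:Z by rewrite !mulr_gt0 // ltz_nat.
pose K x := (- `|lval p1 p2 p3 x| - p1%:Z * p2%:Z * p3%:Z) * (p1%:Z * p2%:Z * p3%:Z).
have Hex : forall x, exists n : nat, Pk p1 p2 p3 x (K x + n%:Z).
  move=> x; exists (absz ((`|lval p1 p2 p3 x| * (p1%:Z * p2%:Z * p3%:Z) - K x)%R)).
  rewrite gez0_abs.
    by rewrite addrC subrK; apply: Pk_upper.
  rewrite /K; have := normr_ge0 (lval p1 p2 p3 x).
  move: (`|lval p1 p2 p3 x|) (p1%:Z * p2%:Z * p3%:Z) gN => A M gM hA; nia.
pose kf x := K x + (ex_minn (Hex x))%:Z.
have kspec : forall x, Pk p1 p2 p3 x (kf x) /\ forall j, j < kf x -> ~~ Pk p1 p2 p3 x j.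
  move=> x; rewrite /kf; case: ex_minnP => n Pn Hmin; split => // j hj.
  case: (ltP j (K x)) => hjK.
    exact: Pk_lower.
  apply/negP => Pj.
  have hj0 : 0 <= j - K x by rewrite subr_ge0.
  have := Hmin (absz (j - K x)).
  rewrite (gez0_abs hj0) (_ : K x + (j - K x) = j); last by ring.
  move=> /(_ Pj); rewrite -lez_nat (gez0_abs hj0) => hle.
  move: hj hle; move: (K x) => Kx; lia.
exists (fun x => zk x (kf x)); split.
- by move=> x; apply/inS_iff.
- move=> x y; split.
  + move=> E; exists (kf x - kf y).
    have := Leq_add _ _ _ _ _ (Lscale (- kf y) Lomega) h1 h2 h3 E.
    rewrite !zk_add (_ : kf y + - kf y = 0); last by ring.
    by rewrite zk0 => E'; apply: Leq_sym; exact: E'.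
  + move=> [n E].
    have T : forall j, Pk p1 p2 p3 y j = Pk p1 p2 p3 x (n + j).
      move=> j; rewrite /Pk; congr (_ <= _); apply: Leq_lval.
      have := Leq_add _ _ _ _ _ (Lscale j Lomega) h1 h2 h3 E.
      by rewrite -/(zk y j) -/(zk x n) zk_add.
    have ex : kf x = n + kf y.
      apply: (min_uniq _ _ _ (kspec x)); split; first by rewrite -T; case: (kspec y).
      move=> j hj; rewrite (_ : j = n + (j - n)); last by ring.
      rewrite -T; apply: (proj2 (kspec y)); lia.
    rewrite ex; apply: Leq_sym.
    have := Leq_add _ _ _ _ _ (Lscale (kf y) Lomega) h1 h2 h3 E.
    by rewrite -/(zk y (kf y)) -/(zk x n) zk_add.
- move=> s hs; exists s.
  have hs0 : inS p1 p2 p3 (zk s 0) by rewrite zk0.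
  move/inS_iff: hs0 => /(_ h1 h2 h3) hs0.
  by rewrite -(min_uniq _ _ _ hs0 (kspec s)) zk0.
Qed.
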